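(* Let $(A,d,\Delta)$ be a mixed chain complex over a field. If it satisfies the $d\Delta$-condition then it is semi-classical, and if it is semi-classical then it admits non-commutative Hodge-to-de Rham degeneration data.
   Context: A mixed chain complex is a graded vector space $A$ with two anticommuting square-zero operators $d$ of degree $-1$ and $\Delta$ of degree $+1$. The $d\Delta$-condition is $\mathrm{Ker}\,d\cap\mathrm{Ker}\,\Delta\cap(\mathrm{Im}\,d+\mathrm{Im}\,\Delta)=\mathrm{Im}\,d\Delta=\mathrm{Im}\,\Delta d$. The complex is semi-classical if every homology class of $(A,d)$ has a representative in $\mathrm{Ker}\,\Delta$. Non-commutative Hodge-to-de Rham degeneration data is a deformation retract $p:(A,d)\to(H(A),0)$, $i:(H(A),0)\to(A,d)$, $h$ of degree $1$ on $A$, with $pi=\mathrm{id}$, $\mathrm{id}_A-ip=dh+hd$, such that $p(\Delta h)^{m-1}\Delta i=0$ for all $m\ge1$. *)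

(* Defs.v *)
From HB Require Import structures.
From mathcomp Require Import all_boot all_order all_algebra.
Set Implicit Arguments. Unset Strict Implicit. Unset Printing Implicit Defensive.
Import Order.TTheory GRing.Theory Num.Theory.
Local Open Scope ring_scope.

(* A homogeneous linear map of degree k from A to B is encoded as a family
   [f : forall n m : int, {linear A n -> B m}] of linear maps between all
   pairs of components, subject to [f n m = 0] whenever [m <> n + k].
   (This avoids type casts such as A (n+1-1) vs A n.)  The composite
   g o f of a degree-k map f with g is the family
   [fun n m x => g (n + k) m (f n (n + k) x)]. *)

Record mixed_complex (K : fieldType) := MixedComplex {
  mc_A : int -> lmodType K;
  mc_d : forall n m : int, {linear mc_A n -> mc_A m};
  mc_D : forall n m : int, {linear mc_A n -> mc_A m};
  mc_d_deg : forall (n m : int) (x : mc_A n), m != n - 1 -> mc_d n m x = 0;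
  mc_D_deg : forall (n m : int) (x : mc_A n), m != n + 1 -> mc_D n m x = 0;
  mc_dd : forall (n : int) (x : mc_A n), mc_d (n - 1) (n - 1 - 1) (mc_d n (n - 1) x) = 0;
  mc_DD : forall (n : int) (x : mc_A n), mc_D (n + 1) (n + 1 + 1) (mc_D n (n + 1) x) = 0;
  mc_anti : forall (n : int) (x : mc_A n),
     mc_d (n + 1) n (mc_D n (n + 1) x) + mc_D (n - 1) n (mc_d n (n - 1) x) = 0
}.

Local Unset Implicit Arguments.
Section Conditions.
Variable K : fieldType.
Variable C : mixed_complex K.
Local Notation A := (mc_A C).
Local Notation d := (mc_d C).
Local Notation D := (mc_D C).

(* The dDelta-condition, stated degreewise (all operators are homogeneous):
   Ker d ∩ Ker Δ ∩ (Im d + Im Δ) = Im dΔ = Im Δd  in each degree n. *)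
Definition dDelta_condition : Prop :=
  forall (n : int) (x : A n),
    ((d n (n - 1) x = 0 /\ D n (n + 1) x = 0 /\
      exists (y : A (n + 1)) (z : A (n - 1)), x = d (n + 1) n y + D (n - 1) n z)
     <-> exists w : A n, x = d (n + 1) n (D n (n + 1) w))
    /\ ((exists w : A n, x = d (n + 1) n (D n (n + 1) w))
        <-> exists w : A n, x = D (n - 1) n (d n (n - 1) w)).

Definition semi_classical : Prop :=
  forall (n : int) (x : A n), d n (n - 1) x = 0 ->
    exists (y : A n) (z : A (n + 1)), D n (n + 1) y = 0 /\ x - y = d (n + 1) n z.

(* For h of degree +1, [dh_iter h j] is the map (Δ h)^j Δ, of degree 2j+1. *)
Fixpoint dh_iter (h : forall n m : int, A n -> A m) (j : nat) (n m : int) : A n -> A m :=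
  match j with
  | 0%N => fun x => D n m x
  | j'.+1 => fun x =>
      D (n + (j'.*2.+2)%:Z) m
        (h (n + (j'.*2.+1)%:Z) (n + (j'.*2.+2)%:Z)
           (dh_iter h j' n (n + (j'.*2.+1)%:Z) x))
  end.

(* Non-commutative Hodge-to-de Rham degeneration data: a deformation retract
   (p, i, h) of (A, d) onto a graded vector space H with zero differential
   (necessarily H ≅ H(A,d)), p, i of degree 0, h of degree 1, with
   p i = id, id - i p = d h + h d, and p (Δ h)^(m-1) Δ i = 0 for m >= 1. *)
Definition has_HdR_degeneration_data : Prop :=
  exists (H : int -> lmodType K)
         (p : forall n m : int, {linear A n -> H m})
         (i : forall n m : int, {linear H n -> A m})
         (h : forall n m : int, {linear A n -> A m}),
    (forall n m (x : A n), m != n -> p n m x = 0) /\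
        (forall n m (y : H n), m != n -> i n m y = 0) /\
        (forall n m (x : A n), m != n + 1 -> h n m x = 0) /\
        (* p and i are chain maps (the differential of H is 0) *)
        (forall n (x : A n), p (n - 1) (n - 1) (d n (n - 1) x) = 0) /\
        (forall n (y : H n), d n (n - 1) (i n n y) = 0) /\
        (forall n (y : H n), p n n (i n n y) = y) /\
        (forall n (x : A n),
           x - i n n (p n n x) = d (n + 1) n (h n (n + 1) x) + h (n - 1) n (d n (n - 1) x)) /\
      (* p (Δ h)^(m-1) Δ i = 0 for all m >= 1, with j = m - 1 *)
        (forall (j : nat) n (y : H n),
           p (n + (j.*2.+1)%:Z) (n + (j.*2.+1)%:Z)
             (dh_iter (fun a b => h a b) j n (n + (j.*2.+1)%:Z) (i n n y)) = 0).

End Conditions.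

(* Main.v *)
Require Import Defs.
From HB Require Import structures.
From mathcomp Require Import all_boot all_order all_algebra.
From mathcomp Require Import boolp classical_sets zify.
Set Implicit Arguments. Unset Strict Implicit. Unset Printing Implicit Defensive.
Import Order.TTheory GRing.Theory Num.Theory.
Local Open Scope ring_scope.

Definition subsp (K : fieldType) (V : lmodType K) (P : V -> Prop) : Prop :=
  P 0 /\ forall (a : K) (x y : V), P x -> P y -> P (a *: x + y).

Lemma subspD (K : fieldType) (V : lmodType K) (P : V -> Prop) : subsp P ->
  forall x y, P x -> P y -> P (x + y).
Proof. by move=> [_ H] x y Px Py; have := H 1 x y Px Py; rewrite scale1r. Qed.
Lemma subspZ (K : fieldType) (V : lmodType K) (P : V -> Prop) : subsp P ->
  forall a x, P x -> P (a *: x).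
Proof. by move=> [H0 H] a x Px; have := H a x 0 Px H0; rewrite addr0. Qed.
Lemma subspN (K : fieldType) (V : lmodType K) (P : V -> Prop) : subsp P ->
  forall x, P x -> P (- x).
Proof. by move=> HP x Px; rewrite -scaleN1r; apply: subspZ. Qed.
Lemma subspB (K : fieldType) (V : lmodType K) (P : V -> Prop) : subsp P ->
  forall x y, P x -> P y -> P (x - y).
Proof. by move=> HP x y Px Py; apply: subspD => //; apply: subspN. Qed.

Definition subT (K : fieldType) (V : lmodType K) (P : V -> Prop) (HP : subsp P) :=
  {x : V | P x}.
HB.instance Definition _ (K : fieldType) (V : lmodType K) (P : V -> Prop) (HP : subsp P) := gen_eqMixin (@subT K V P HP).
HB.instance Definition _ (K : fieldType) (V : lmodType K) (P : V -> Prop) (HP : subsp P) := gen_choiceMixin (@subT K V P HP).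

Definition sub0 (K : fieldType) (V : lmodType K) (P : V -> Prop) (HP : subsp P) : @subT K V P HP := exist _ 0 (proj1 HP).
Definition subadd (K : fieldType) (V : lmodType K) (P : V -> Prop) (HP : subsp P) (x y : @subT K V P HP) : subT HP :=
  exist _ (sval x + sval y) (subspD HP (svalP x) (svalP y)).
Definition subopp (K : fieldType) (V : lmodType K) (P : V -> Prop) (HP : subsp P) (x : @subT K V P HP) : subT HP :=
  exist _ (- sval x) (subspN HP (svalP x)).
Definition subscale (K : fieldType) (V : lmodType K) (P : V -> Prop) (HP : subsp P) (a : K) (x : @subT K V P HP) : subT HP :=
  exist _ (a *: sval x) (subspZ HP a (svalP x)).

Lemma subT_eq (K : fieldType) (V : lmodType K) (P : V -> Prop) (HP : subsp P) (x y : @subT K V P HP) : sval x = sval y -> x = y.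
Proof. by case: x y => x px [y py] /= e; subst y; rewrite (Prop_irrelevance px py). Qed.

Lemma subaddA (K : fieldType) (V : lmodType K) (P : V -> Prop) (HP : subsp P) : associative (@subadd K V P HP).
Proof. by move=> x y z; apply: subT_eq => /=; rewrite addrA. Qed.
Lemma subaddC (K : fieldType) (V : lmodType K) (P : V -> Prop) (HP : subsp P) : commutative (@subadd K V P HP).
Proof. by move=> x y; apply: subT_eq => /=; rewrite addrC. Qed.
Lemma subadd0 (K : fieldType) (V : lmodType K) (P : V -> Prop) (HP : subsp P) : left_id (sub0 HP) (@subadd K V P HP).
Proof. by move=> x; apply: subT_eq => /=; rewrite add0r. Qed.
Lemma subaddN (K : fieldType) (V : lmodType K) (P : V -> Prop) (HP : subsp P) : left_inverse (sub0 HP) (@subopp K V P HP) (@subadd K V P HP).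
Proof. by move=> x; apply: subT_eq => /=; rewrite addNr. Qed.
HB.instance Definition _ (K : fieldType) (V : lmodType K) (P : V -> Prop) (HP : subsp P) := GRing.isZmodule.Build (@subT K V P HP)
  (@subaddA K V P HP) (@subaddC K V P HP) (@subadd0 K V P HP) (@subaddN K V P HP).

Lemma subscaleA (K : fieldType) (V : lmodType K) (P : V -> Prop) (HP : subsp P) a b (v : @subT K V P HP) :
  subscale a (subscale b v) = subscale (a * b) v.
Proof. by apply: subT_eq => /=; rewrite scalerA. Qed.
Lemma subscale1 (K : fieldType) (V : lmodType K) (P : V -> Prop) (HP : subsp P) : left_id 1 (@subscale K V P HP).
Proof. by move=> x; apply: subT_eq => /=; rewrite scale1r. Qed.
Lemma subscaleDr (K : fieldType) (V : lmodType K) (P : V -> Prop) (HP : subsp P) : right_distributive (@subscale K V P HP) +%R.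
Proof. by move=> a x y; apply: subT_eq => /=; rewrite scalerDr. Qed.
Lemma subscaleDl (K : fieldType) (V : lmodType K) (P : V -> Prop) (HP : subsp P) (v : @subT K V P HP) : {morph (fun a : K => subscale a v) : a b / a + b}.
Proof. by move=> a b; apply: subT_eq => /=; rewrite scalerDl. Qed.
HB.instance Definition _ (K : fieldType) (V : lmodType K) (P : V -> Prop) (HP : subsp P) := GRing.Zmodule_isLmodule.Build K (@subT K V P HP)
  (@subscaleA K V P HP) (@subscale1 K V P HP) (@subscaleDr K V P HP) (@subscaleDl K V P HP).

Definition linw (K : fieldType) (U V : lmodType K) (f : U -> V)
  (Hf : forall a x y, f (a *: x + y) = a *: f x + f y) := f.
HB.instance Definition _ (K : fieldType) (U V : lmodType K) f Hf := GRing.isLinear.Build K U V *:%R (@linw K U V f Hf)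
  (fun a x y => Hf a x y).



Lemma rel_compl (K : fieldType) (V : lmodType K) (P U : V -> Prop) :
  subsp P -> subsp U -> (forall x, P x -> U x) ->
  exists Q : V -> Prop, subsp Q /\ (forall x, Q x -> U x) /\
    (forall x, P x -> Q x -> x = 0) /\
    (forall x, U x -> exists p q, P p /\ Q q /\ x = p + q).
Proof.
move=> HP HU PU.
pose G (Q : set V) := (forall a x y, Q x -> Q y -> Q (a *: x + y)) /\
  (forall x, Q x -> U x) /\ (forall x, P x -> Q x -> x = 0).
have [A [[GA1 [GA2 GA3]] Amax]] : exists A, G A /\ forall B, (A `<` B)%classic -> ~ G B.
  apply: Zorn_bigcup => F FG Ftot; split; [|split].
  - move=> a x y [Y1 FY1 Y1x] [Y2 FY2 Y2y].
    have [S12|S21] := Ftot _ _ FY1 FY2.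
    + exists Y2 => //; apply: (proj1 (FG _ FY2)) => //; exact: S12.
    + exists Y1 => //; apply: (proj1 (FG _ FY1)) => //; exact: S21.
  - by move=> x [Y FY Yx]; apply: (proj1 (proj2 (FG _ FY))).
  - by move=> x Px [Y FY Yx]; apply: (proj2 (proj2 (FG _ FY))).
pose Q x := A x \/ x = 0.
have HQ : subsp Q.
  split; first by right.
  move=> a x y [Ax|->] [Ay|->].
  - by left; apply: GA1.
  - left; rewrite addr0.
    have := GA1 (a - 1) x x Ax Ax; by rewrite scalerBl scale1r subrK.
  - by left; rewrite scaler0 add0r.
  - by right; rewrite scaler0 addr0.
exists Q; split=> //; split; first by move=> x [/GA2//|->]; exact: proj1 HU.
split; first by move=> x Px [/(GA3 _ Px)//|->].
move=> x Ux; apply: contrapT => Hn.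
pose B y := exists q (c : K), Q q /\ y = q + c *: x.
have GB : G B.
  rewrite /G; split; [|split].
  - move=> a y z [q1 [c1 [Q1 ->]]] [q2 [c2 [Q2 ->]]].
    exists (a *: q1 + q2), (a * c1 + c2); split; first exact: (proj2 HQ).
    by rewrite scalerDr scalerDl scalerA addrACA.
  - move=> y [q [c [Qq ->]]]; apply: subspD => //; last exact: subspZ.
    by case: Qq => [/GA2//|->]; exact: proj1 HU.
  - move=> y Py [q [c [Qq ey]]].
    have [c0|cn0] := eqVneq c 0.
      move: ey; rewrite c0 scale0r addr0 => ey; subst y.
      by case: Qq => [/(GA3 _ Py)//|->].
    exfalso; apply: Hn; exists (c^-1 *: y), (- (c^-1 *: q)); split.
      exact: subspZ.
    split; first exact: subspN (subspZ HQ _ Qq).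
    by rewrite ey scalerDr scalerA mulVf // scale1r addrAC subrr add0r.
apply: (Amax B _ GB); split.
- by move=> y Ay; exists y, 0; rewrite scale0r addr0; split=> //; left.
- move=> BA; have : B x by exists 0, 1; rewrite scale1r add0r; split=> //; right.
  move=> /BA Ax; apply: Hn; exists 0, x; split; first exact: proj1 HP.
  by rewrite add0r; split=> //; left.
Qed.


Definition sump (K : fieldType) (V : lmodType K) (X Y : V -> Prop) (v : V) :=
  exists x y, X x /\ Y y /\ v = x + y.

Lemma subsp_sum (K : fieldType) (V : lmodType K) (X Y : V -> Prop) :
  subsp X -> subsp Y -> subsp (sump X Y).
Proof.
move=> HX HY; split; first by exists 0, 0; rewrite addr0; split; [exact: proj1 HX|split; [exact: proj1 HY|]].
move=> a u v [x1 [y1 [X1 [Y1 ->]]]] [x2 [y2 [X2 [Y2 ->]]]].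
exists (a *: x1 + x2), (a *: y1 + y2); split; first exact: (proj2 HX).
split; first exact: (proj2 HY).
by rewrite scalerDr addrACA.
Qed.

Lemma subsp_and (K : fieldType) (V : lmodType K) (X Y : V -> Prop) :
  subsp X -> subsp Y -> subsp (fun v => X v /\ Y v).
Proof.
move=> HX HY; split; first by split; [exact: proj1 HX|exact: proj1 HY].
by move=> a u v [? ?] [? ?]; split; [apply: (proj2 HX)|apply: (proj2 HY)].
Qed.

Definition dsum (K : fieldType) (V : lmodType K) (X Y : V -> Prop) :=
  [/\ subsp X, subsp Y, (forall x, X x -> Y x -> x = 0) &
      (forall v, exists x y, X x /\ Y y /\ v = x + y)].

Definition proj (K : fieldType) (V : lmodType K) (X Y : V -> Prop) (v : V) : V :=
  xget 0 (fun u => X u /\ Y (v - u)).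

Lemma proj_spec (K : fieldType) (V : lmodType K) (X Y : V -> Prop) :
  dsum X Y -> forall v, X (proj X Y v) /\ Y (v - proj X Y v).
Proof.
case=> HX HY H0 Hd v; rewrite /proj; apply: (@xgetPex V 0 (fun u => X u /\ Y (v - u))).
have [x [y [Xx [Yy ->]]]] := Hd v; exists x; split=> //.
by rewrite addrC addKr.
Qed.

Lemma proj_uniq (K : fieldType) (V : lmodType K) (X Y : V -> Prop) :
  dsum X Y -> forall v u, X u -> Y (v - u) -> proj X Y v = u.
Proof.
move=> DS v u Xu Yu; have [Xp Yp] := proj_spec DS v.
case: DS => HX HY H0 _; apply/eqP; rewrite -subr_eq0; apply/eqP; apply: H0.
  exact: subspB.
have -> : proj X Y v - u = (v - u) - (v - proj X Y v).
  by rewrite opprB [RHS]addrC [RHS]addrA subrK.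
exact: subspB.
Qed.

Lemma proj_lin (K : fieldType) (V : lmodType K) (X Y : V -> Prop) :
  dsum X Y -> forall a x y, proj X Y (a *: x + y) = a *: proj X Y x + proj X Y y.
Proof.
move=> DS a x y; have [Xx Yx] := proj_spec DS x; have [Xy Yy] := proj_spec DS y.
case: (DS) => HX HY _ _.
apply: proj_uniq => //; first exact: (proj2 HX).
have -> : a *: x + y - (a *: proj X Y x + proj X Y y) =
  a *: (x - proj X Y x) + (y - proj X Y y).
  by rewrite scalerBr opprD addrACA.
exact: (proj2 HY).
Qed.

Lemma tri_dsum (K : fieldType) (V : lmodType K) (X Y Z : V -> Prop) :
  subsp X -> subsp Y -> subsp Z ->
  (forall x y z, X x -> Y y -> Z z -> x + y + z = 0 -> x = 0 /\ y = 0 /\ z = 0) ->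
  (forall v, exists x y z, [/\ X x, Y y, Z z & v = x + y + z]) ->
  dsum X (sump Y Z) /\ dsum Y (sump X Z).
Proof.
move=> HX HY HZ U E; split; split => //; try exact: subsp_sum.
- move=> x Xx [y [z [Yy [Zz ex]]]].
  have := U x (- y) (- z) Xx (subspN HY Yy) (subspN HZ Zz).
  have E0 : x + - y + - z = 0 by rewrite -addrA -opprD ex subrr.
  by move=> /(_ E0) [].
- move=> v; have [x [y [z [Xx Yy Zz ->]]]] := E v; exists x, (y + z).
  split=> //; split; first by exists y, z.
  by rewrite addrA.
- move=> y Yy [x [z [Xx [Zz ey]]]].
  have := U (- x) y (- z) (subspN HX Xx) Yy (subspN HZ Zz).
  have E0 : - x + y + - z = 0 by rewrite addrAC -opprD addrC ey subrr.
  by move=> /(_ E0) [_ []].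
- move=> v; have [x [y [z [Xx Yy Zz ->]]]] := E v; exists y, (x + z).
  split=> //; split; first by exists x, z.
  by rewrite addrA (addrC x y).
Qed.

Definition castF (K : fieldType) (F : int -> lmodType K) (n m : int) (x : F n) : F m :=
  match @eqP _ n m with ReflectT e => eq_rect n F x m e | ReflectF _ => 0 end.
Arguments castF {K} F n m x.

Lemma castF_id (K : fieldType) (F : int -> lmodType K) n (x : F n) : castF F n n x = x.
Proof.
rewrite /castF; case: eqP => // e.
by rewrite (eq_irrelevance e erefl).
Qed.

Lemma castF_ne (K : fieldType) (F : int -> lmodType K) n m (x : F n) :
  m != n -> castF F n m x = 0.
Proof. by rewrite /castF eq_sym; case: eqP. Qed.

Lemma castF_lin (K : fieldType) (F : int -> lmodType K) n m a (x y : F n) :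
  castF F n m (a *: x + y) = a *: castF F n m x + castF F n m y.
Proof.
rewrite /castF; case: eqP => [e|_]; last by rewrite scaler0 addr0.
by case: m / e.
Qed.

Lemma castF0 (K : fieldType) (F : int -> lmodType K) n m : castF F n m 0 = 0.
Proof. by rewrite /castF; case: eqP => // e; case: m / e. Qed.


Lemma dd_gen (K : fieldType) (C : mixed_complex K) k n m (x : mc_A C k) :
  mc_d C n m (mc_d C k n x) = 0.
Proof.
have [e|ne] := eqVneq n (k - 1); last by rewrite (@mc_d_deg _ C k n x) // linear0.
subst n; have [e|ne] := eqVneq m (k - 1 - 1); first by subst m; exact: mc_dd.
exact: mc_d_deg.
Qed.

Lemma anti_gen (K : fieldType) (C : mixed_complex K) k m (x : mc_A C k) :
  mc_d C (k + 1) m (mc_D C k (k + 1) x) + mc_D C (k - 1) m (mc_d C k (k - 1) x) = 0.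
Proof.
have [e|ne] := eqVneq m k; first by subst m; exact: mc_anti.
rewrite mc_d_deg; last by lia.
by rewrite mc_D_deg ?addr0 //; lia.
Qed.

Definition Zc (K : fieldType) (C : mixed_complex K) n (x : mc_A C n) :=
  forall m, mc_d C n m x = 0.
Definition KDc (K : fieldType) (C : mixed_complex K) n (x : mc_A C n) :=
  forall m, mc_D C n m x = 0.
Definition Bc (K : fieldType) (C : mixed_complex K) n (x : mc_A C n) :=
  exists z : mc_A C (n + 1), x = mc_d C (n + 1) n z.

Lemma ZcE (K : fieldType) (C : mixed_complex K) n (x : mc_A C n) :
  mc_d C n (n - 1) x = 0 -> Zc x.
Proof.
move=> H m; have [e|ne] := eqVneq m (n - 1); first by subst m.
exact: mc_d_deg.
Qed.

Lemma KDcE (K : fieldType) (C : mixed_complex K) n (x : mc_A C n) :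
  mc_D C n (n + 1) x = 0 -> KDc x.
Proof.
move=> H m; have [e|ne] := eqVneq m (n + 1); first by subst m.
exact: mc_D_deg.
Qed.

Lemma Bc_d (K : fieldType) (C : mixed_complex K) k n (z : mc_A C k) :
  Bc (mc_d C k n z).
Proof.
have [e|ne] := eqVneq k (n + 1); first by subst k; exists z.
exists 0; rewrite linear0 mc_d_deg //; lia.
Qed.

Lemma subsp_Zc (K : fieldType) (C : mixed_complex K) n : subsp (@Zc K C n).
Proof.
split; first by move=> m; rewrite linear0.
by move=> a x y Hx Hy m; rewrite linearP Hx Hy scaler0 addr0.
Qed.

Lemma subsp_KDc (K : fieldType) (C : mixed_complex K) n : subsp (@KDc K C n).
Proof.
split; first by move=> m; rewrite linear0.
by move=> a x y Hx Hy m; rewrite linearP Hx Hy scaler0 addr0.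
Qed.

Lemma subsp_Bc (K : fieldType) (C : mixed_complex K) n : subsp (@Bc K C n).
Proof.
split; first by exists 0; rewrite linear0.
by move=> a x y [z1 ->] [z2 ->]; exists (a *: z1 + z2); rewrite linearP.
Qed.

Lemma Bc_Zc (K : fieldType) (C : mixed_complex K) n (x : mc_A C n) : Bc x -> Zc x.
Proof. by move=> [z ->] m; rewrite dd_gen. Qed.

Lemma part1 (K : fieldType) (C : mixed_complex K) :
  dDelta_condition K C -> semi_classical K C.
Proof.
move=> H n x dx.
pose u := mc_D C n (n + 1) x.
have du : forall m, mc_d C (n + 1) m u = 0.
  by move=> m; have := @anti_gen _ C n m x; rewrite dx linear0 addr0.
have Du : mc_D C (n + 1) (n + 1 + 1) u = 0 by exact: mc_DD.
have Hc := H (n + 1) u.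
have e : n + 1 - 1 = n by rewrite addrK.
move: Hc; move: (n + 1 - 1) e => k e; subst k => -[Hc1 Hc2].
have [w Hw] : exists w : mc_A C (n + 1), u = mc_D C n (n + 1) (mc_d C (n + 1) n w).
  apply/Hc2/Hc1; split; first exact: du.
  split=> //; exists 0, x; by rewrite linear0 add0r.
exists (x - mc_d C (n + 1) n w), w; split; last by rewrite opprB addrC subrK.
by rewrite linearB /= -Hw subrr.
Qed.


Lemma ZcE' (K : fieldType) (C : mixed_complex K) k n (x : mc_A C n) :
  n = k + 1 -> mc_d C n k x = 0 -> Zc x.
Proof.
move=> e H m; have [e'|ne] := eqVneq m k; first by subst m.
apply: mc_d_deg; lia.
Qed.

Lemma part2 (K : fieldType) (C : mixed_complex K) :
  semi_classical K C -> has_HdR_degeneration_data K C.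
Proof.
move=> SC.
have hS : forall n, exists S : mc_A C n -> Prop, subsp S /\
    (forall x, S x -> Zc x /\ KDc x) /\
    (forall x, (Bc x /\ KDc x) -> S x -> x = 0) /\
    (forall x, Zc x /\ KDc x -> exists p q, (Bc p /\ KDc p) /\ S q /\ x = p + q).
  move=> n; apply: rel_compl.
  - exact: subsp_and (subsp_Bc C n) (subsp_KDc C n).
  - exact: subsp_and (subsp_Zc C n) (subsp_KDc C n).
  - by move=> x [Bx Kx]; split=> //; exact: Bc_Zc.
have hW : forall n, exists W : mc_A C n -> Prop, subsp W /\
    (forall x : mc_A C n, W x -> True) /\
    (forall x, Zc x -> W x -> x = 0) /\
    (forall x, True -> exists p q, Zc p /\ W q /\ x = p + q).
  move=> n; apply: rel_compl; [exact: subsp_Zc | by split | by []].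
pose S n := sval (cid (hS n)).
have HS n : subsp (S n) /\
    (forall x, S n x -> Zc x /\ KDc x) /\
    (forall x, (Bc x /\ KDc x) -> S n x -> x = 0) /\
    (forall x, Zc x /\ KDc x -> exists p q, (Bc p /\ KDc p) /\ S n q /\ x = p + q).
  exact: (svalP (cid (hS n))).
pose W n := sval (cid (hW n)).
have HW n : subsp (W n) /\
    (forall x : mc_A C n, W n x -> True) /\
    (forall x, Zc x -> W n x -> x = 0) /\
    (forall x, True -> exists p q, Zc p /\ W n q /\ x = p + q).
  exact: (svalP (cid (hW n))).
clearbody S W.
have HSs n := proj1 (HS n).
have HSZK n := proj1 (proj2 (HS n)).
have HSd n := proj1 (proj2 (proj2 (HS n))).
have HSe n := proj2 (proj2 (proj2 (HS n))).
have HWs n := proj1 (HW n).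
have HWd n := proj1 (proj2 (proj2 (HW n))).
have HWe n := proj2 (proj2 (proj2 (HW n))).
clear HS HW hS hW.
have tri n : dsum (S n) (sump (@Bc K C n) (W n)) /\ dsum (@Bc K C n) (sump (S n) (W n)).
  apply: tri_dsum => //; first exact: subsp_Bc.
  - move=> s b w Ss Bb Ww E0.
    have Zs := (HSZK n s Ss).1.
    have Zb := Bc_Zc Bb.
    have Zw : Zc w.
      have -> : w = - (s + b) by apply/eqP; rewrite -addr_eq0 addrC E0.
      exact: (subspN (subsp_Zc C n) (subspD (subsp_Zc C n) Zs Zb)).
    have w0 := HWd n w Zw Ww; subst w.
    move: E0; rewrite addr0 => /eqP; rewrite addr_eq0 => /eqP eb.
    have Kb : KDc b.
      rewrite -[b]opprK -eb; exact: (subspN (subsp_KDc C n) (HSZK n s Ss).2).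
    have Bs : Bc s by rewrite eb; exact: (subspN (subsp_Bc C n) Bb).
    have s0 : s = 0 by apply: (HSd n s) => //; split=> //; exact: (HSZK n s Ss).2.
    by split=> //; split=> //; rewrite -[b]opprK -eb s0 oppr0.
  - move=> v; have [p [q [Zp [Wq ->]]]] := HWe n v I.
    have [y [t [Dy ey]]] := SC n p (Zp (n - 1)).
    have ey' : y = p - mc_d C (n + 1) n t by rewrite -ey opprB addrC subrK.
    have Zy : Zc y.
      rewrite ey'; apply: (subspB (subsp_Zc C n) Zp).
      exact: Bc_Zc (Bc_d _ _).
    have [b' [s [[Bb' _] [Ss ey2]]]] := HSe n y (conj Zy (KDcE Dy)).
    have ep : p = b' + s + mc_d C (n + 1) n t by rewrite -ey2 -ey addrC subrK.
    exists s, (b' + mc_d C (n + 1) n t), q; split=> //.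
      exact: (subspD (subsp_Bc C n) Bb' (Bc_d _ _)).
    by rewrite ep (addrC b') addrA.
pose pS n := proj (S n) (sump (@Bc K C n) (W n)).
pose pB n := proj (@Bc K C n) (sump (S n) (W n)).
have pS_lin n a (x y : mc_A C n) : pS n (a *: x + y) = a *: pS n x + pS n y.
  by rewrite /pS; exact: (proj_lin (tri n).1 a x y).
have pB_lin n a (x y : mc_A C n) : pB n (a *: x + y) = a *: pB n x + pB n y.
  by rewrite /pB; exact: (proj_lin (tri n).2 a x y).
have pS_in n (x : mc_A C n) : S n (pS n x) := (proj_spec (tri n).1 x).1.
have pB_in n (x : mc_A C n) : Bc (pB n x) := (proj_spec (tri n).2 x).1.
have pS_B n (x : mc_A C n) : Bc x -> pS n x = 0.
  move=> Bx; rewrite /pS; apply: (@proj_uniq _ _ _ _ (tri n).1 x 0); first exact: (proj1 (HSs n)).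
  by rewrite subr0; exists x, 0; rewrite addr0; split=> //; split=> //; exact: (proj1 (HWs n)).
have pS_S n (x : mc_A C n) : S n x -> pS n x = x.
  move=> Sx; rewrite /pS; apply: (@proj_uniq _ _ _ _ (tri n).1 x x) => //.
  rewrite subrr; exists 0, 0; rewrite addr0; split; first exact: (proj1 (subsp_Bc C n)).
  by split=> //; exact: (proj1 (HWs n)).
have pB_B n (x : mc_A C n) : Bc x -> pB n x = x.
  move=> Bx; rewrite /pB; apply: (@proj_uniq _ _ _ _ (tri n).2 x x) => //.
  rewrite subrr; exists 0, 0; rewrite addr0; split; first exact: (proj1 (HSs n)).
  by split=> //; exact: (proj1 (HWs n)).
have dec n (x : mc_A C n) : W n (x - pS n x - pB n x).
  have [_ [b [w [Bb [Ww ew]]]]] := proj_spec (tri n).1 x.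
  change (x - pS n x = b + w) in ew.
  have hx : x = pS n x + (b + w) by rewrite -ew addrC subrK.
  have eb : pB n x = b.
    rewrite /pB; apply: (@proj_uniq _ _ _ _ (tri n).2 x b) => //.
    exists (pS n x), w; split=> //; split=> //.
    by apply/eqP; rewrite subr_eq {1}hx (addrC b) addrA.
  by rewrite eb ew (addrC b) addrK.
pose hW n m (x : mc_A C n) : mc_A C m :=
  xget 0 (fun w => W m w /\ mc_d C m n w = pB n x).
have hW_spec n m (x : mc_A C n) : m = n + 1 ->
    W m (hW n m x) /\ mc_d C m n (hW n m x) = pB n x.
  move=> e; subst m; rewrite /hW.
  apply: (@xgetPex _ 0 (fun w => W (n + 1) w /\ mc_d C (n + 1) n w = pB n x)).
  have [z ez] := pB_in n x.
  have [p [q [Zp [Wq ezz]]]] := HWe (n + 1) z I.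
  by exists q; split=> //; rewrite ez ezz linearD Zp add0r.
have hW_uniq n m (x : mc_A C n) w : m = n + 1 -> W m w ->
    mc_d C m n w = pB n x -> hW n m x = w.
  move=> e Ww dw; have [W1 d1] := hW_spec n m x e.
  apply/eqP; rewrite -subr_eq0; apply/eqP; apply: (HWd m).
    by apply: (ZcE' e); rewrite linearB /= d1 dw subrr.
  exact: (subspB (HWs m)).
pose h n m (x : mc_A C n) : mc_A C m := if m == n + 1 then hW n m x else 0.
have h_lin n m a (x y : mc_A C n) : h n m (a *: x + y) = a *: h n m x + h n m y.
  rewrite /h; case: eqP => [e|_]; last by rewrite scaler0 addr0.
  have [W1 d1] := hW_spec n m x e; have [W2 d2] := hW_spec n m y e.
  apply: hW_uniq => //; first exact: (proj2 (HWs m)).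
  by rewrite linearP /= d1 d2 pB_lin.
pose piS n (v : mc_A C n) : subT (HSs n) := exist (S n) (pS n v) (pS_in n v).
have plin n m a (x y : mc_A C n) :
  piS m (castF (mc_A C) n m (a *: x + y)) =
  a *: piS m (castF (mc_A C) n m x) + piS m (castF (mc_A C) n m y).
  by apply: subT_eq => /=; rewrite castF_lin pS_lin.
have ilin n m a (y z : subT (HSs n)) :
  castF (mc_A C) n m (sval (a *: y + z)) =
  a *: castF (mc_A C) n m (sval y) + castF (mc_A C) n m (sval z).
  by rewrite /= castF_lin.
exists (fun n => subT (HSs n)).
exists (fun n m => @linw K (mc_A C n) (subT (HSs m))
          (fun x => piS m (castF (mc_A C) n m x)) (plin n m)).
exists (fun n m => @linw K (subT (HSs n)) (mc_A C m)
          (fun y => castF (mc_A C) n m (sval y)) (ilin n m)).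
exists (fun n m => @linw K (mc_A C n) (mc_A C m) (h n m) (h_lin n m)).
split.
  move=> n m x nm; apply: subT_eq; unfold linw => /=.
  by rewrite (@castF_ne K (mc_A C) n m x nm) pS_B //; exact: (proj1 (subsp_Bc C m)).
split.
  move=> n m y nm; change (castF (mc_A C) n m (sval y) = 0).
  by rewrite (@castF_ne K (mc_A C) n m _ nm).
split.
  by move=> n m x nm; change (h n m x = 0); rewrite /h (negbTE nm).
split.
  move=> n x; apply: subT_eq => /=.
  by rewrite castF_id pS_B //; exact: Bc_d.
split.
  move=> n y; change (mc_d C n (n - 1) (castF (mc_A C) n n (sval y)) = 0).
  by rewrite castF_id; exact: ((HSZK n _ (svalP y)).1 (n - 1)).
split.
  move=> n y; apply: subT_eq => /=; rewrite castF_id.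
  change (pS n (castF (mc_A C) n n (sval y)) = sval y).
  by rewrite castF_id pS_S //; exact: (svalP y).
split.
  move=> n x.
  change (x - castF (mc_A C) n n (pS n (castF (mc_A C) n n x)) =
    mc_d C (n + 1) n (h n (n + 1) x) + h (n - 1) n (mc_d C n (n - 1) x)).
  rewrite !castF_id /h eqxx subrK eqxx.
  rewrite (proj2 (hW_spec n (n + 1) x erefl)).
  rewrite (@hW_uniq (n - 1) n (mc_d C n (n - 1) x) (x - pS n x - pB n x)).
  - by rewrite [RHS]addrC subrK.
  - by rewrite subrK.
  - exact: dec.
  rewrite (pB_B (n - 1) (mc_d C n (n - 1) x)); last exact: (@Bc_d K C n (n - 1) x).
  rewrite !linearB /= ((HSZK n _ (pS_in n x)).1 (n - 1)) (Bc_Zc (pB_in n x) (n - 1)).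
  by rewrite !subr0.
move=> j n y.
have D0 : forall m, mc_D C n m (castF (mc_A C) n n (sval y)) = 0.
  by move=> m; rewrite castF_id; exact: ((HSZK n _ (svalP y)).2 m).
have h0 : forall a b, h a b 0 = 0.
  move=> a b; rewrite /h; case: eqP => // e.
  apply: hW_uniq => //; first exact: (proj1 (HWs b)).
  by rewrite linear0 pB_B //; exact: (proj1 (subsp_Bc C a)).
have Hit : forall j m, dh_iter K C (fun a b => h a b) j n m (castF (mc_A C) n n (sval y)) = 0.
  elim=> [|k IH] m /=; first exact: D0.
  by rewrite IH h0 linear0.
apply: subT_eq => /=.
change (pS (n + (j.*2.+1)%:Z) (castF (mc_A C) (n + (j.*2.+1)%:Z) (n + (j.*2.+1)%:Z) (dh_iter K C (fun a b => h a b) j n (n + (j.*2.+1)%:Z)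
   (castF (mc_A C) n n (sval y)))) = 0).
rewrite Hit castF0 pS_B //; exact: (proj1 (subsp_Bc C _)).
Qed.


Theorem mainTheorem17 (K : fieldType) (C : mixed_complex K) :
  (dDelta_condition K C -> semi_classical K C) /\
  (semi_classical K C -> has_HdR_degeneration_data K C).
Proof. split; [exact: part1 | exact: part2]. Qed.
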